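(* Let $\Sigma$ be an alphabet. The functor $G=U\circ\Theta:\mathbf{TTS}_{\Sigma}\to\mathbf{Tr}_{\Sigma\times\mathbb{R}_{>0}}$ is a coreflection.
   Context: For a set $C$, a guard is a subset of $\mathbb{R}_{\ge0}^C$ of the form $\prod_{c\in C}I_c$ with each $I_c$ a non-empty interval of $\mathbb{R}_{\ge0}$; $G_C$ denotes the set of guards. A timed transition system is $(S,i,C,\Delta)$ with $S$ a set of states, $i\in S$, $C$ a set of clocks, and $\Delta\subseteq S\times\Sigma\times 2^C\times G_C\times S$ (the $2^C$ component being the set of clocks reset). A morphism $(S,i,C,\Delta)\to(S',i',C',\Delta')$ is a pair $(f,g)$ with $f:S\to S'$, $f(i)=i'$, and $g:C'\to C$, such that for every $(s,a,R,\prod_{c\in C}I_c,s')\in\Delta$ there is $(f(s),a,R',\prod_{c'\in C'}I'_{c'},f(s'))\in\Delta'$ with $R'=g^{-1}(R)$ and $I_{g(c')}\subseteq I'_{c'}$ for all $c'\in C'$. Composition is $(f_2,g_2)\circ(f_1,g_1)=(f_2\circ f_1,g_1\circ g_2)$. This is the category $\mathbf{TTS}_{\Sigma}$. For an alphabet $A$, $\mathbf{TS}_{A}$ is the category of transition systems $(S,i,\Delta)$, $\Delta\subseteq S\times A\times S$, with morphisms the functions on states preserving the initial state and transitions; a run is a sequence $i=q_0\xrightarrow{a_1}\cdots\xrightarrow{a_n}q_n$ of transitions; $\mathbf{Tr}_{A}$ is the full subcategory of synchronization trees (every state is the end of exactly one run). The functor $\Theta:\mathbf{TTS}_{\Sigma}\to\mathbf{TS}_{\Sigma\times\mathbb{R}_{>0}}$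 sends $(S,i,C,\Delta)$ to $(S\times\mathbb{R}_{\ge0}^C,(i,\tilde0),\Gamma)$, where $\tilde0$ is the zero valuation and $((s,\nu),(a,t),(s',\nu'))\in\Gamma$ iff there is $(s,a,R,\prod_c I_c,s')\in\Delta$ with $\nu(c)+t\in I_c$ for all $c\in C$ and $\nu'(c)=0$ for $c\in R$, $\nu'(c)=\nu(c)+t$ for $c\notin R$; on morphisms $\Theta(f,g)(s,\nu)=(f(s),\nu\circ g)$. The unfolding functor $U:\mathbf{TS}_{A}\to\mathbf{Tr}_{A}$ sends a transition system to the synchronization tree whose states are its runs, with initial state the one-element run and transitions $(\pi,a,\pi\xrightarrow{a}q)$ extending runs by one transition; on morphisms it applies the morphism pointwise to runs. A functor is a coreflection if it is a right adjoint whose left adjoint is fully faithful (equivalently, a right adjoint with unit a natural isomorphism). *)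

(* Defs.v *)
From Stdlib Require Import Reals List ProofIrrelevance.
Open Scope R_scope.

Record TS (A : Type) := mkTS {
  ts_st : Type;
  ts_init : ts_st;
  ts_tr : ts_st -> A -> ts_st -> Prop }.
Arguments ts_st {A}.
Arguments ts_init {A}.
Arguments ts_tr {A}.

Definition is_ts_mor {A : Type} (X Y : TS A) (h : ts_st X -> ts_st Y) : Prop :=
  h (ts_init X) = ts_init Y /\
  (forall s a s', ts_tr X s a s' -> ts_tr Y (h s) a (h s')).

Definition is_ts_iso {A : Type} (X Y : TS A) (h : ts_st X -> ts_st Y) : Prop :=
  is_ts_mor X Y h /\
  exists k : ts_st Y -> ts_st X,
    is_ts_mor Y X k /\ (forall x, k (h x) = x) /\ (forall y, h (k y) = y).

(* A run i = q0 -a1-> q1 ... -an-> qn is encoded as the list [(a1,q1);...;(an,qn)]. *)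
Fixpoint run_from {A : Type} (X : TS A) (q : ts_st X) (l : list (A * ts_st X)) : Prop :=
  match l with
  | nil => True
  | (a, q') :: l' => ts_tr X q a q' /\ run_from X q' l'
  end.

Definition is_run {A : Type} (X : TS A) (l : list (A * ts_st X)) : Prop :=
  run_from X (ts_init X) l.

Definition run_end {A : Type} (X : TS A) (l : list (A * ts_st X)) : ts_st X :=
  last (map snd l) (ts_init X).

Definition is_tree {A : Type} (X : TS A) : Prop :=
  forall s : ts_st X, exists! l, is_run X l /\ run_end X l = s.

Definition Run {A : Type} (X : TS A) : Type := { l : list (A * ts_st X) | is_run X l }.

Definition run_nil {A : Type} (X : TS A) : Run X := exist _ nil I.

Definition U {A : Type} (X : TS A) : TS A :=
  {| ts_st := Run X;
     ts_init := run_nil X;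
     ts_tr := fun p a p' =>
       exists q, proj1_sig p' = proj1_sig p ++ (a, q) :: nil |}.

Definition run_map {A : Type} (X Y : TS A) (h : ts_st X -> ts_st Y)
  (l : list (A * ts_st X)) : list (A * ts_st Y) :=
  map (fun aq => (fst aq, h (snd aq))) l.

Lemma run_from_map {A : Type} (X Y : TS A) (h : ts_st X -> ts_st Y) :
  (forall s a s', ts_tr X s a s' -> ts_tr Y (h s) a (h s')) ->
  forall l q, run_from X q l -> run_from Y (h q) (run_map X Y h l).
Proof.
  intros Hh l; induction l as [|[a q'] l IH]; intros q H; simpl in *; auto.
  destruct H as [H1 H2]; split; auto.
Qed.

Lemma run_map_ok {A : Type} (X Y : TS A) (h : ts_st X -> ts_st Y) :
  is_ts_mor X Y h -> forall l, is_run X l -> is_run Y (run_map X Y h l).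
Proof.
  intros [H0 Hh] l Hl; unfold is_run; rewrite <- H0; now apply (run_from_map X Y h).
Qed.

Definition U_mor {A : Type} (X Y : TS A) (h : ts_st X -> ts_st Y)
  (Hh : is_ts_mor X Y h) : Run X -> Run Y :=
  fun p => exist _ (run_map X Y h (proj1_sig p)) (run_map_ok X Y h Hh _ (proj2_sig p)).

Definition is_interval (I : R -> Prop) : Prop :=
  (exists x, I x) /\ (forall x, I x -> 0 <= x) /\
  (forall x y z, I x -> I z -> x <= y -> y <= z -> I y).

(* a guard prod_{c in C} I_c, given by its family of non-empty intervals *)
Definition is_guard {C : Type} (I : C -> R -> Prop) : Prop :=
  forall c, is_interval (I c).

(* (S, i, C, Delta); a transition (s, a, Rs, I, s') has reset set Rs ⊆ C
   (a predicate on C) and guard I *)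
Record TTS (Sigma : Type) := mkTTS {
  tts_st : Type;
  tts_init : tts_st;
  tts_clk : Type;
  tts_tr : tts_st -> Sigma -> (tts_clk -> Prop) -> (tts_clk -> R -> Prop) -> tts_st -> Prop;
  tts_tr_guard : forall s a Rs I s', tts_tr s a Rs I s' -> is_guard I }.
Arguments tts_st {Sigma}.
Arguments tts_init {Sigma}.
Arguments tts_clk {Sigma}.
Arguments tts_tr {Sigma}.
Arguments tts_tr_guard {Sigma}.

Definition is_tts_mor {Sigma : Type} (X Y : TTS Sigma)
  (f : tts_st X -> tts_st Y) (g : tts_clk Y -> tts_clk X) : Prop :=
  f (tts_init X) = tts_init Y /\
  forall s a Rs I s', tts_tr X s a Rs I s' ->
    exists Rs' I', tts_tr Y (f s) a Rs' I' (f s') /\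
      (forall c', Rs' c' <-> Rs (g c')) /\
      (forall c' x, I (g c') x -> I' c' x).

Definition posR : Type := { t : R | 0 < t }.

Definition Val (C : Type) : Type := { nu : C -> R | forall c, 0 <= nu c }.

Lemma zero_val_ok {C : Type} : forall c : C, 0 <= (fun _ : C => 0) c.
Proof. intros; apply Rle_refl. Qed.

Definition zero_val (C : Type) : Val C := exist (fun nu' : C -> R => forall c, 0 <= nu' c) (fun _ => 0) (@zero_val_ok C).

Definition Theta_tr {Sigma : Type} (X : TTS Sigma)
  (p : tts_st X * Val (tts_clk X)) (l : Sigma * posR)
  (p' : tts_st X * Val (tts_clk X)) : Prop :=
  let t := proj1_sig (snd l) in
  exists Rs I, tts_tr X (fst p) (fst l) Rs I (fst p') /\
    (forall c, I c (proj1_sig (snd p) c + t)) /\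
    (forall c, Rs c -> proj1_sig (snd p') c = 0) /\
    (forall c, ~ Rs c -> proj1_sig (snd p') c = proj1_sig (snd p) c + t).

Definition Theta {Sigma : Type} (X : TTS Sigma) : TS (Sigma * posR) :=
  {| ts_st := tts_st X * Val (tts_clk X);
     ts_init := (tts_init X, zero_val (tts_clk X));
     ts_tr := Theta_tr X |}.

Definition comp_val (C C' : Type) (g : C' -> C) (nu : Val C) : Val C' :=
  exist (fun nu' : C' -> R => forall c, 0 <= nu' c) (fun c' => proj1_sig nu (g c')) (fun c' => proj2_sig nu (g c')).

Definition Theta_map {Sigma : Type} (X Y : TTS Sigma)
  (f : tts_st X -> tts_st Y) (g : tts_clk Y -> tts_clk X) :
  ts_st (Theta X) -> ts_st (Theta Y) :=
  fun p => (f (fst p), comp_val (tts_clk X) (tts_clk Y) g (snd p)).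

Lemma Theta_mor_ok {Sigma : Type} (X Y : TTS Sigma)
  (f : tts_st X -> tts_st Y) (g : tts_clk Y -> tts_clk X) :
  is_tts_mor X Y f g -> is_ts_mor (Theta X) (Theta Y) (Theta_map X Y f g).
Proof.
  intros [H0 Hf]; split.
  - simpl; unfold Theta_map; simpl; rewrite H0; f_equal.
    unfold comp_val, zero_val; simpl.
    apply eq_exist_uncurried; exists eq_refl; apply proof_irrelevance.
  - intros [s nu] [a t] [s' nu'] [Rs [I [HD [HI [HR HN]]]]]; simpl in *.
    destruct (Hf _ _ _ _ _ HD) as [Rs' [I' [HD' [HRs HI']]]].
    exists Rs', I'; simpl.
    split; [exact HD' | split; [| split]].
    + intros c'; apply HI'; apply HI.
    + intros c' Hc'; apply HR; apply HRs; auto.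
    + intros c' Hc'; apply HN; intro H; apply Hc'; apply HRs; auto.
Qed.

Definition G {Sigma : Type} (X : TTS Sigma) : TS (Sigma * posR) := U (Theta X).

Definition G_mor {Sigma : Type} (X Y : TTS Sigma)
  (f : tts_st X -> tts_st Y) (g : tts_clk Y -> tts_clk X)
  (H : is_tts_mor X Y f g) : ts_st (G X) -> ts_st (G Y) :=
  U_mor (Theta X) (Theta Y) (Theta_map X Y f g) (Theta_mor_ok X Y f g H).

(* G is a coreflection: G lands in Tr, and for every synchronization tree T
   there is a universal arrow eta_T : T -> G(F T) (so G is a right adjoint,
   with unit eta), and every eta_T is an isomorphism (unit is a natural iso). *)
Definition is_coreflection_G (Sigma : Type) : Prop :=
  (forall X : TTS Sigma, is_tree (G X)) /\
  (forall T : TS (Sigma * posR), is_tree T ->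
    exists (F : TTS Sigma) (eta : ts_st T -> ts_st (G F)),
      is_ts_mor T (G F) eta /\
      is_ts_iso T (G F) eta /\
      forall (X : TTS Sigma) (h : ts_st T -> ts_st (G X)),
        is_ts_mor T (G X) h ->
        exists (f : tts_st F -> tts_st X) (g : tts_clk X -> tts_clk F)
               (H : is_tts_mor F X f g),
          (forall x, G_mor F X f g H (eta x) = h x) /\
          (forall (f' : tts_st F -> tts_st X) (g' : tts_clk X -> tts_clk F)
                  (H' : is_tts_mor F X f' g'),
             (forall x, G_mor F X f' g' H' (eta x) = h x) ->
             (forall s, f' s = f s) /\ (forall c, g' c = g c))).

(* Main.v *)
Require Import Defs.
From Stdlib Require Import Reals List ProofIrrelevance Lra Classical ClassicalEpsilon FunctionalExtensionality PropExtensionality.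
Import ListNotations.
Open Scope R_scope.

Lemma last_cons_d {B : Type} (m : list B) (x d : B) : last (x :: m) d = last m x.
Proof.
  revert x d; induction m as [|y m IH]; intros x d; [reflexivity|].
  change (last (y :: m) d = last (y :: m) x). rewrite !IH. reflexivity.
Qed.

Lemma run_from_app {A : Type} (X : TS A) l1 l2 q :
  run_from X q (l1 ++ l2) <-> run_from X q l1 /\ run_from X (last (map snd l1) q) l2.
Proof.
  revert q; induction l1 as [|[a q'] l1 IH]; intros q; cbn -[last].
  - tauto.
  - rewrite IH. cbn -[last]. rewrite last_cons_d. tauto.
Qed.

Lemma run_end_snoc {A : Type} (X : TS A) l a s : run_end X (l ++ [(a, s)]) = s.
Proof. unfold run_end. rewrite map_app. simpl. apply last_last. Qed.

Lemma is_run_snoc {A : Type} (X : TS A) l a s :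
  is_run X (l ++ [(a, s)]) <-> is_run X l /\ ts_tr X (run_end X l) a s.
Proof. unfold is_run, run_end. rewrite run_from_app. simpl. tauto. Qed.

Lemma run_end_map {A : Type} (X Y : TS A) (h : ts_st X -> ts_st Y) l :
  is_ts_mor X Y h -> run_end Y (run_map X Y h l) = h (run_end X l).
Proof.
  intros [H0 _]. unfold run_end. rewrite <- H0. generalize (ts_init X).
  induction l as [|[a q] l IH]; intros d; cbn -[last]; [reflexivity|].
  rewrite !last_cons_d. apply IH.
Qed.

Lemma run_eq {A : Type} (X : TS A) (p q : Run X) : proj1_sig p = proj1_sig q -> p = q.
Proof. destruct p, q; simpl; intros; subst; f_equal; apply proof_irrelevance. Qed.

Lemma val_eq {C : Type} (nu1 nu2 : Val C) :
  (forall c, proj1_sig nu1 c = proj1_sig nu2 c) -> nu1 = nu2.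
Proof.
  destruct nu1 as [n1 p1], nu2 as [n2 p2]; simpl; intros H.
  assert (n1 = n2) by (apply functional_extensionality; auto). subst.
  f_equal; apply proof_irrelevance.
Qed.

Lemma U_tree {A : Type} (X : TS A) : is_tree (U X).
Proof.
  assert (Ex : forall ls (pr : is_run X ls), exists l, is_run (U X) l /\
            run_end (U X) l = exist _ ls pr).
  { intros ls; induction ls as [|[a q] ls IH] using rev_ind; intros pr.
    - exists nil; split; [exact I|]. apply run_eq; reflexivity.
    - pose proof pr as pr'. apply is_run_snoc in pr' as [pr0 _].
      destruct (IH pr0) as [l0 [Hl0 He0]].
      exists (l0 ++ [(a, exist _ (ls ++ [(a, q)]) pr)]).
      rewrite is_run_snoc, run_end_snoc. split; [split|reflexivity]; auto.
      rewrite He0. simpl. exists q. reflexivity. }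
  assert (Un : forall l l', is_run (U X) l -> is_run (U X) l' ->
            run_end (U X) l = run_end (U X) l' -> l = l').
  { intros l; induction l as [|[a r] l IH] using rev_ind; intros l' Hl Hl' He;
    induction l' as [|[a' r'] l' _] using rev_ind; auto.
    - rewrite run_end_snoc in He. apply is_run_snoc in Hl' as [_ [q' Hq]].
      subst r'. simpl in Hq. first [destruct (app_cons_not_nil _ _ _ Hq) | destruct (app_cons_not_nil _ _ _ (eq_sym Hq))].
    - rewrite run_end_snoc in He. apply is_run_snoc in Hl as [_ [q Hq]].
      subst r. simpl in Hq. first [destruct (app_cons_not_nil _ _ _ Hq) | destruct (app_cons_not_nil _ _ _ (eq_sym Hq))].
    - rewrite !run_end_snoc in He. subst r'.
      apply is_run_snoc in Hl as [Hl [q Hq]]. apply is_run_snoc in Hl' as [Hl' [q' Hq']].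
      rewrite Hq in Hq'. apply app_inj_tail in Hq' as [E1 E2]. inversion E2; subst.
      f_equal. apply IH; auto. apply run_eq; auto. }
  intros [ls pr]. destruct (Ex ls pr) as [l [H1 H2]]. exists l. split; [auto|].
  intros l' [H1' H2']. apply Un; [auto|auto|]. rewrite H2, H2'. reflexivity.
Qed.

Lemma tree_ex {A : Type} (T : TS A) (Ht : is_tree T) s :
  exists l, is_run T l /\ run_end T l = s.
Proof. destruct (Ht s) as [l [H _]]; eauto. Qed.

Definition runT {A : Type} (T : TS A) (Ht : is_tree T) (s : ts_st T) : list (A * ts_st T) :=
  proj1_sig (constructive_indefinite_description _ (tree_ex T Ht s)).

Lemma runT_spec {A : Type} (T : TS A) (Ht : is_tree T) s :
  is_run T (runT T Ht s) /\ run_end T (runT T Ht s) = s.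
Proof. unfold runT. apply proj2_sig. Qed.

Lemma runT_uniq {A : Type} (T : TS A) (Ht : is_tree T) l :
  is_run T l -> runT T Ht (run_end T l) = l.
Proof.
  intros Hl. destruct (Ht (run_end T l)) as [x [_ Hx]].
  transitivity x; [symmetry|]; apply Hx; auto using runT_spec.
Qed.

Lemma runT_init {A : Type} (T : TS A) (Ht : is_tree T) : runT T Ht (ts_init T) = nil.
Proof. apply (runT_uniq T Ht nil). exact I. Qed.

Lemma runT_step {A : Type} (T : TS A) (Ht : is_tree T) u l v :
  ts_tr T u l v -> runT T Ht v = runT T Ht u ++ [(l, v)].
Proof.
  intros H. pose proof (runT_uniq T Ht (runT T Ht u ++ [(l, v)])) as E.
  rewrite run_end_snoc in E. apply E. apply is_run_snoc.
  destruct (runT_spec T Ht u) as [H1 H2]. rewrite H2. auto.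
Qed.

Lemma tree_not_init {A : Type} (T : TS A) (Ht : is_tree T) u l v :
  ts_tr T u l v -> v <> ts_init T.
Proof.
  intros H E. pose proof (runT_step T Ht u l v H) as E2. subst v.
  rewrite runT_init in E2. destruct (app_cons_not_nil _ _ _ E2).
Qed.


Definition step_t {Sigma St : Type} (P : St -> Prop) (v : R) (x : (Sigma * posR) * St) : R :=
  if excluded_middle_informative (P (snd x)) then 0 else v + proj1_sig (snd (fst x)).

Definition tsince {Sigma St : Type} (P : St -> Prop) (l : list ((Sigma * posR) * St)) : R :=
  fold_left (step_t P) l 0.

Lemma tsince_snoc {Sigma St : Type} (P : St -> Prop) l (x : (Sigma * posR) * St) :
  tsince P (l ++ [x]) = step_t P (tsince P l) x.
Proof. unfold tsince. rewrite fold_left_app. reflexivity. Qed.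

Lemma tsince_nonneg {Sigma St : Type} (P : St -> Prop) (l : list ((Sigma * posR) * St)) :
  0 <= tsince P l.
Proof.
  unfold tsince. assert (G : forall (l : list ((Sigma * posR) * St)) v, 0 <= v -> 0 <= fold_left (step_t P) l v).
  { induction l0 as [|x l0 IH]; intros v Hv; simpl; auto.
    apply IH. unfold step_t. destruct excluded_middle_informative; [lra|].
    destruct (snd (fst x)) as [t Ht]; simpl; lra. }
  apply G; lra.
Qed.

Definition Clk {A : Type} (T : TS A) : Type := { P : ts_st T -> Prop | ~ P (ts_init T) }.

Definition valF {Sigma : Type} (T : TS (Sigma * posR)) (Ht : is_tree T) (u : ts_st T) : Val (Clk T) :=
  exist (fun nu => forall c, 0 <= nu c) (fun P : Clk T => tsince (proj1_sig P) (runT T Ht u))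
    (fun P => tsince_nonneg _ _).

Definition Ftr {Sigma : Type} (T : TS (Sigma * posR)) (Ht : is_tree T)
  (u : ts_st T) (a : Sigma) (Rs : Clk T -> Prop) (I : Clk T -> R -> Prop) (v : ts_st T) : Prop :=
  exists t : posR, ts_tr T u (a, t) v /\ (forall P, Rs P <-> proj1_sig P v) /\
    (forall P x, I P x <-> x = proj1_sig (valF T Ht u) P + proj1_sig t).

Lemma Ftr_guard {Sigma : Type} (T : TS (Sigma * posR)) (Ht : is_tree T) :
  forall s a Rs I s', Ftr T Ht s a Rs I s' -> is_guard I.
Proof.
  intros s a Rs I s' [[t tp] [_ [_ HI]]] c. simpl in HI.
  pose proof (tsince_nonneg (proj1_sig c) (runT T Ht s)) as H0.
  split; [|split].
  - eexists. apply HI. reflexivity.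
  - intros x Hx. apply HI in Hx. simpl in Hx. lra.
  - intros x y z Hx Hz H1 H2. apply HI in Hx; apply HI in Hz. apply HI. lra.
Qed.

Definition FT {Sigma : Type} (T : TS (Sigma * posR)) (Ht : is_tree T) : TTS Sigma :=
  mkTTS Sigma (ts_st T) (ts_init T) (Clk T) (Ftr T Ht) (Ftr_guard T Ht).

Lemma valF_init {Sigma : Type} (T : TS (Sigma * posR)) (Ht : is_tree T) :
  valF T Ht (ts_init T) = zero_val (Clk T).
Proof. apply val_eq. intros c. simpl. rewrite runT_init. reflexivity. Qed.

Lemma valF_step {Sigma : Type} (T : TS (Sigma * posR)) (Ht : is_tree T) u l v :
  ts_tr T u l v -> forall P : Clk T, proj1_sig (valF T Ht v) P =
    if excluded_middle_informative (proj1_sig P v) then 0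
    else proj1_sig (valF T Ht u) P + proj1_sig (snd l).
Proof.
  intros H P. simpl. rewrite (runT_step T Ht u l v H), tsince_snoc. reflexivity.
Qed.

Lemma valF_zero_iff {Sigma : Type} (T : TS (Sigma * posR)) (Ht : is_tree T) v (P : Clk T) :
  v <> ts_init T -> (proj1_sig P v <-> proj1_sig (valF T Ht v) P = 0).
Proof.
  intros Hv. destruct (runT_spec T Ht v) as [H1 H2].
  destruct (runT T Ht v) as [|x l] eqn:E using rev_ind.
  - exfalso. apply Hv. rewrite <- H2. reflexivity.
  - clear IHl. destruct x as [lab w]. rewrite run_end_snoc in H2. subst w.
    apply is_run_snoc in H1 as [_ Htr].
    rewrite (valF_step T Ht _ _ _ Htr).
    pose proof (tsince_nonneg (proj1_sig P) (runT T Ht (run_end T l))).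
    destruct (snd lab) as [t tp]. simpl.
    destruct excluded_middle_informative; split; intros; auto; try contradiction; lra.
Qed.

Definition liftr {Sigma : Type} (T : TS (Sigma * posR)) (Ht : is_tree T)
  (l : list ((Sigma * posR) * ts_st T)) : list ((Sigma * posR) * ts_st (Theta (FT T Ht))) :=
  map (fun x => (fst x, (snd x, valF T Ht (snd x)))) l.

Lemma lift_end {Sigma : Type} (T : TS (Sigma * posR)) (Ht : is_tree T) l :
  run_end (Theta (FT T Ht)) (liftr T Ht l) = (run_end T l, valF T Ht (run_end T l)).
Proof.
  induction l as [|[lab v] l _] using rev_ind.
  - cbn [liftr map run_end last]. rewrite valF_init. reflexivity.
  - unfold liftr. rewrite map_app. simpl. rewrite !run_end_snoc. reflexivity.
Qed.

Lemma lift_run {Sigma : Type} (T : TS (Sigma * posR)) (Ht : is_tree T) l :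
  is_run T l -> is_run (Theta (FT T Ht)) (liftr T Ht l).
Proof.
  induction l as [|[[a t] v] l IH] using rev_ind; intros Hl; [exact I|].
  apply is_run_snoc in Hl as [Hl Htr].
  unfold liftr. rewrite map_app. simpl. apply is_run_snoc. split; [apply IH; auto|].
  fold (liftr T Ht l). rewrite lift_end.
  exists (fun P : Clk T => proj1_sig P v),
    (fun P x => x = proj1_sig (valF T Ht (run_end T l)) P + proj1_sig t).
  simpl. split; [|split; [|split]].
  - exists t. split; [auto|split; intros; reflexivity].
  - intros; reflexivity.
  - intros P HP. change (proj1_sig (valF T Ht v) P = 0). rewrite (valF_step T Ht _ _ _ Htr).
    destruct excluded_middle_informative; [reflexivity|contradiction].
  - intros P HP. change (proj1_sig (valF T Ht v) P = proj1_sig (valF T Ht (run_end T l)) P + proj1_sig t). rewrite (valF_step T Ht _ _ _ Htr).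
    destruct excluded_middle_informative; [contradiction|reflexivity].
Qed.

Definition eta {Sigma : Type} (T : TS (Sigma * posR)) (Ht : is_tree T) (s : ts_st T) :
  ts_st (G (FT T Ht)) :=
  exist _ (liftr T Ht (runT T Ht s)) (lift_run T Ht _ (proj1 (runT_spec T Ht s))).

Lemma eta_mor {Sigma : Type} (T : TS (Sigma * posR)) (Ht : is_tree T) :
  is_ts_mor T (G (FT T Ht)) (eta T Ht).
Proof.
  split.
  - apply run_eq. simpl. rewrite runT_init. reflexivity.
  - intros u l v H. simpl. exists (v, valF T Ht v).
    rewrite (runT_step T Ht u l v H). unfold liftr. rewrite map_app. reflexivity.
Qed.

Lemma posR_eq (t1 t2 : posR) : proj1_sig t1 = proj1_sig t2 -> t1 = t2.
Proof. destruct t1, t2; simpl; intros; subst; f_equal; apply proof_irrelevance. Qed.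

Lemma STEP {Sigma : Type} (T : TS (Sigma * posR)) (Ht : is_tree T) u l q :
  Theta_tr (FT T Ht) (u, valF T Ht u) l q ->
  ts_tr T u l (fst q) /\ q = (fst q, valF T Ht (fst q)).
Proof.
  destruct l as [a t], q as [v nu].
  intros [Rs [I [[t0 [Htr [HRs HI]]] [HG [HR1 HR2]]]]]. simpl in *.
  set (P0 := exist (fun P : ts_st T -> Prop => ~ P (ts_init T)) (fun _ => False) (fun H => H) : Clk T).
  pose proof (HG P0) as H0. apply HI in H0.
  assert (t = t0) by (apply posR_eq; lra). subst t0.
  split; auto. f_equal. apply val_eq. intros P.
  rewrite (valF_step T Ht _ _ _ Htr). destruct excluded_middle_informative as [Hp|Hp].
  - apply HR1, HRs, Hp.
  - apply HR2. intros Hr. apply Hp, HRs, Hr.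
Qed.

Lemma INV2 {Sigma : Type} (T : TS (Sigma * posR)) (Ht : is_tree T) p :
  is_run (Theta (FT T Ht)) p ->
  p = liftr T Ht (runT T Ht (fst (run_end (Theta (FT T Ht)) p))).
Proof.
  induction p as [|[l q] p IH] using rev_ind; intros Hp.
  - simpl. rewrite runT_init. reflexivity.
  - apply is_run_snoc in Hp as [Hp Hst].
    specialize (IH Hp).
    assert (E : run_end (Theta (FT T Ht)) p =
                (fst (run_end (Theta (FT T Ht)) p), valF T Ht (fst (run_end (Theta (FT T Ht)) p)))).
    { rewrite IH at 1. rewrite lift_end. rewrite (proj2 (runT_spec T Ht _)). reflexivity. }
    rewrite E in Hst. apply STEP in Hst as [Htr Hq].
    rewrite run_end_snoc. rewrite (runT_step T Ht _ _ _ Htr).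
    unfold liftr. rewrite map_app. fold (liftr T Ht (runT T Ht (fst (run_end (Theta (FT T Ht)) p)))).
    rewrite <- IH. simpl. do 3 f_equal. exact Hq.
Qed.

Lemma END {Sigma : Type} (T : TS (Sigma * posR)) (Ht : is_tree T) p :
  is_run (Theta (FT T Ht)) p ->
  run_end (Theta (FT T Ht)) p =
    (fst (run_end (Theta (FT T Ht)) p), valF T Ht (fst (run_end (Theta (FT T Ht)) p))).
Proof.
  intros Hp. rewrite (INV2 T Ht p Hp) at 1. rewrite lift_end, (proj2 (runT_spec T Ht _)).
  reflexivity.
Qed.

Lemma eta_iso {Sigma : Type} (T : TS (Sigma * posR)) (Ht : is_tree T) :
  is_ts_iso T (G (FT T Ht)) (eta T Ht).
Proof.
  split; [apply eta_mor|].
  exists (fun p : ts_st (G (FT T Ht)) => fst (run_end (Theta (FT T Ht)) (proj1_sig p))).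
  split; [split|split].
  - reflexivity.
  - intros p l p' [q Hq]. pose proof (proj2_sig p') as Hr. simpl in Hr.
    change (is_run (Theta (FT T Ht)) (proj1_sig p')) in Hr. rewrite Hq in Hr. apply is_run_snoc in Hr as [Hr Hst].
    rewrite (END T Ht _ Hr) in Hst. apply STEP in Hst as [Htr _].
    change (ts_tr T (fst (run_end (Theta (FT T Ht)) (proj1_sig p))) l (fst (run_end (Theta (FT T Ht)) (proj1_sig p')))). rewrite Hq, run_end_snoc. exact Htr.
  - intros x. simpl. rewrite lift_end. apply runT_spec.
  - intros y. apply run_eq. simpl. symmetry. apply INV2. apply proj2_sig.
Qed.

Definition fU {Sigma : Type} (T : TS (Sigma * posR)) (X : TTS Sigma)
  (h : ts_st T -> ts_st (G X)) (s : ts_st T) : tts_st X :=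
  fst (run_end (Theta X) (proj1_sig (h s))).

Definition gP {Sigma : Type} (T : TS (Sigma * posR)) (X : TTS Sigma)
  (h : ts_st T -> ts_st (G X)) (c : tts_clk X) : ts_st T -> Prop :=
  fun v => v <> ts_init T /\ proj1_sig (snd (run_end (Theta X) (proj1_sig (h v)))) c = 0.

Definition gU {Sigma : Type} (T : TS (Sigma * posR)) (X : TTS Sigma)
  (h : ts_st T -> ts_st (G X)) (c : tts_clk X) : Clk T :=
  exist (fun P : ts_st T -> Prop => ~ P (ts_init T)) (gP T X h c) (fun H : gP T X h c (ts_init T) => proj1 H eq_refl).

Lemma h_init {Sigma : Type} (T : TS (Sigma * posR)) (X : TTS Sigma)
  (h : ts_st T -> ts_st (G X)) : is_ts_mor T (G X) h -> proj1_sig (h (ts_init T)) = nil.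
Proof. intros [H0 _]. rewrite H0. reflexivity. Qed.

Lemma hstep {Sigma : Type} (T : TS (Sigma * posR)) (X : TTS Sigma)
  (h : ts_st T -> ts_st (G X)) u l v : is_ts_mor T (G X) h -> ts_tr T u l v ->
  exists q, proj1_sig (h v) = proj1_sig (h u) ++ [(l, q)] /\
    Theta_tr X (run_end (Theta X) (proj1_sig (h u))) l q.
Proof.
  intros [_ Hh] Htr. destruct (Hh _ _ _ Htr) as [q Hq]. exists q. split; auto.
  pose proof (proj2_sig (h v)) as Hr. change (is_run (Theta X) (proj1_sig (h v))) in Hr.
  rewrite Hq in Hr. apply is_run_snoc in Hr. apply Hr.
Qed.

Lemma val_pos {C : Type} (nu : Val C) c : 0 <= proj1_sig nu c.
Proof. apply (proj2_sig nu). Qed.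

Lemma INV {Sigma : Type} (T : TS (Sigma * posR)) (Ht : is_tree T) (X : TTS Sigma)
  (h : ts_st T -> ts_st (G X)) (Hh : is_ts_mor T (G X) h) l :
  is_run T l -> forall c, tsince (gP T X h c) l =
    proj1_sig (snd (run_end (Theta X) (proj1_sig (h (run_end T l))))) c.
Proof.
  induction l as [|[lab v] l IH] using rev_ind; intros Hl c.
  - change (0 = proj1_sig (snd (run_end (Theta X) (proj1_sig (h (ts_init T))))) c). rewrite (h_init T X h Hh). reflexivity.
  - apply is_run_snoc in Hl as [Hl Htr]. rewrite tsince_snoc, run_end_snoc.
    destruct (hstep T X h _ _ _ Hh Htr) as [q [Eq [Rs' [I' [HX [HG [HR1 HR2]]]]]]].
    rewrite Eq, run_end_snoc. unfold step_t; simpl.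
    destruct excluded_middle_informative as [Hg|Hg].
    + destruct Hg as [_ Hg]. rewrite Eq, run_end_snoc in Hg. auto.
    + rewrite IH by auto. destruct (classic (Rs' c)) as [Hr|Hr].
      * exfalso. apply Hg. split; [apply (tree_not_init T Ht _ _ _ Htr)|].
        rewrite Eq, run_end_snoc. auto.
      * rewrite HR2 by auto. reflexivity.
Qed.

Lemma COR {Sigma : Type} (T : TS (Sigma * posR)) (Ht : is_tree T) (X : TTS Sigma)
  (h : ts_st T -> ts_st (G X)) (Hh : is_ts_mor T (G X) h) v c :
  proj1_sig (valF T Ht v) (gU T X h c) =
    proj1_sig (snd (run_end (Theta X) (proj1_sig (h v)))) c.
Proof.
  simpl. destruct (runT_spec T Ht v) as [H1 H2].
  rewrite (INV T Ht X h Hh _ H1). rewrite H2. reflexivity.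
Qed.

Lemma UMOR {Sigma : Type} (T : TS (Sigma * posR)) (Ht : is_tree T) (X : TTS Sigma)
  (h : ts_st T -> ts_st (G X)) (Hh : is_ts_mor T (G X) h) :
  is_tts_mor (FT T Ht) X (fU T X h) (gU T X h).
Proof.
  split.
  - unfold fU. change (fst (run_end (Theta X) (proj1_sig (h (ts_init T)))) = tts_init X). rewrite (h_init T X h Hh). reflexivity.
  - intros u a Rs I v [t [Htr [HRs HI]]].
    destruct (hstep T X h _ _ _ Hh Htr) as [q [Eq [Rs' [I' [HX [HG [HR1 HR2]]]]]]].
    exists Rs', I'. simpl in HX.
    assert (Ef : fU T X h v = fst q) by (unfold fU; rewrite Eq, run_end_snoc; reflexivity).
    split; [|split].
    + rewrite Ef. exact HX.
    + intros c. rewrite HRs. simpl. unfold gP. rewrite Eq, run_end_snoc. split.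
      * intros Hr. split; [apply (tree_not_init T Ht _ _ _ Htr)|]. auto.
      * intros [_ H0]. apply NNPP. intros Hr. rewrite HR2 in H0 by auto.
        destruct t as [t tp]. simpl in H0. match type of H0 with ?a + _ = _ => assert (0 <= a) by apply val_pos end. lra.
    + intros c x Hx. apply HI in Hx. rewrite (COR T Ht X h Hh) in Hx. subst x. apply HG.
Qed.

Lemma MAP {Sigma : Type} (T : TS (Sigma * posR)) (Ht : is_tree T) (X : TTS Sigma)
  (h : ts_st T -> ts_st (G X)) (Hh : is_ts_mor T (G X) h) l :
  is_run T l -> proj1_sig (h (run_end T l)) =
    run_map (Theta (FT T Ht)) (Theta X) (Theta_map (FT T Ht) X (fU T X h) (gU T X h)) (liftr T Ht l).
Proof.
  induction l as [|[lab v] l IH] using rev_ind; intros Hl.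
  - apply (h_init T X h Hh).
  - apply is_run_snoc in Hl as [Hl Htr]. rewrite run_end_snoc.
    destruct (hstep T X h _ _ _ Hh Htr) as [q [Eq _]].
    rewrite Eq, IH by auto. unfold liftr, run_map. rewrite !map_app. simpl.
    do 3 f_equal. destruct q as [q1 q2]. unfold Theta_map. simpl. f_equal.
    + unfold fU. rewrite Eq, run_end_snoc. reflexivity.
    + apply val_eq. intros c. simpl. 
      change (proj1_sig q2 c = proj1_sig (valF T Ht v) (gU T X h c)).
      rewrite (COR T Ht X h Hh). rewrite Eq, run_end_snoc. reflexivity.
Qed.

Lemma clk_eq {A : Type} (T : TS A) (P Q : Clk T) :
  (forall v, proj1_sig P v <-> proj1_sig Q v) -> P = Q.
Proof.
  destruct P as [P p], Q as [Q q]; simpl; intros H.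
  assert (P = Q) by (apply functional_extensionality; intros v; apply propositional_extensionality; auto).
  subst. f_equal. apply proof_irrelevance.
Qed.

Theorem theorem3 (Sigma : Type) : is_coreflection_G Sigma.
Proof.
  split; [intros X; apply U_tree|].
  intros T Ht. exists (FT T Ht), (eta T Ht).
  split; [apply eta_mor|]. split; [apply eta_iso|].
  intros X h Hh. exists (fU T X h), (gU T X h), (UMOR T Ht X h Hh).
  assert (Hx : forall x, G_mor (FT T Ht) X (fU T X h) (gU T X h) (UMOR T Ht X h Hh) (eta T Ht x) = h x).
  { intros x. apply run_eq. simpl. destruct (runT_spec T Ht x) as [H1 H2].
    rewrite <- (MAP T Ht X h Hh _ H1). rewrite H2. reflexivity. }
  split; [exact Hx|].
  intros f' g' H' HG'.
  assert (E : forall s, run_end (Theta X) (proj1_sig (h s)) =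
     (f' s, comp_val _ _ g' (valF T Ht s))).
  { intros s. rewrite <- (HG' s). simpl.
    rewrite (run_end_map _ _ _ _ (Theta_mor_ok (FT T Ht) X f' g' H')).
    rewrite lift_end, (proj2 (runT_spec T Ht s)). reflexivity. }
  split.
  - intros s. unfold fU. rewrite E. reflexivity.
  - intros c. apply clk_eq. intros v. simpl. unfold gP. rewrite E. simpl.
    destruct (classic (v = ts_init T)) as [Hv|Hv].
    + subst v. split; [intros Hc; exfalso; apply (proj2_sig (g' c)), Hc|].
      intros [Hc _]. exfalso. apply Hc. reflexivity.
    + rewrite (valF_zero_iff T Ht v (g' c) Hv). tauto.
Qed.
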